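(* Let $\alpha=(\alpha_1,\dots,\alpha_k)$ be a composition of $n$ with $k$ parts. The number of Dyck paths of semilength $n$ with ascent composition $\alpha$ is \[\det\left[\binom{j-i+\sum_{\ell=1}^i\alpha_\ell}{j-(i-1)}\right]_{1\le i,j\le k-1}\] (the empty determinant, for $k=1$, being $1$).
   Context: A Dyck path of semilength $n$ is a word in $U,D$ with $n$ letters of each kind such that every prefix has at least as many $U$'s as $D$'s. Writing it uniquely as $U^{\alpha_1}D^{\delta_1}\cdots U^{\alpha_k}D^{\delta_k}$ with all exponents positive, its ascent composition is $(\alpha_1,\dots,\alpha_k)$. Binomial coefficients $\binom{N}{r}$ with $r<0$ are $0$. *)

(* Defs.v *)
From mathcomp Require Import all_boot all_order all_algebra.
Set Implicit Arguments. Unset Strict Implicit. Unset Printing Implicit Defensive.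
Import GRing.Theory.

(* A word in {U,D} is a seq bool, with true = U and false = D. *)

Definition prefix_ok (w : seq bool) : bool :=
  all (fun i => count_mem false (take i w) <= count_mem true (take i w))
      (iota 0 (size w).+1).

Definition dyck (n : nat) (w : seq bool) : bool :=
  [&& size w == 2 * n, count_mem true w == n & prefix_ok w].

Fixpoint asc_aux (cur : nat) (w : seq bool) : seq nat :=
  match w with
  | [::] => if 0 < cur then [:: cur] else [::]
  | true :: w' => asc_aux cur.+1 w'
  | false :: w' => if 0 < cur then cur :: asc_aux 0 w' else asc_aux 0 w'
  end.

(* ascent composition: for w = U^a1 D^d1 ... U^ak D^dk (exponents > 0)
   this is (a1, ..., ak) *)
Definition ascent_comp (w : seq bool) : seq nat := asc_aux 0 w.

Definition is_composition (n : nat) (alpha : seq nat) : bool :=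
  all (fun a => 0 < a) alpha && (sumn alpha == n).

Definition num_dyck_asc (n : nat) (alpha : seq nat) : nat :=
  #|[set w : (2 * n).-tuple bool | dyck n w && (ascent_comp w == alpha)]|.

(* The (k-1)x(k-1) matrix, k = size alpha, with 0-based indices i, j;
   1-based I = i+1, J = j+1: entry C(J - I + sum_{l<=I} alpha_l, J - (I-1)),
   zero when J - (I-1) < 0. Note sum_{l<=I} alpha_l >= I for compositions,
   so the top index is a genuine natural number. *)
Definition asc_matrix (alpha : seq nat) : 'M[int]_((size alpha).-1) :=
  \matrix_(i, j)
    (if i <= j.+1 then
       Posz ('C(j + sumn (take i.+1 alpha) - i, j.+1 - i))
     else 0%R).

(* Main.v *)
Require Import Defs.
From mathcomp Require Import all_boot all_order all_algebra.
From mathcomp Require Import zify.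
Set Implicit Arguments. Unset Strict Implicit. Unset Printing Implicit Defensive.


Fixpoint Ch (lo : nat) (bs : seq nat) : nat :=
  if bs is b :: bs' then \sum_(lo <= v < b.+1) Ch v.+1 bs' else 1.


Lemma Ch_shift_gen B : forall lo, Ch lo.+1 (map S B) = Ch lo B.
Proof.
elim: B => [|b B IH] lo //=.
rewrite -(addn1 lo) big_addn subn1 /=.
by apply: eq_bigr => v _; rewrite addn1 IH.
Qed.

Lemma sum_shift lo x B :
  \sum_(lo.+1 <= v < x.+1) Ch v.+1 (map S B) = \sum_(lo <= v < x) Ch v.+1 B.
Proof.
rewrite -(addn1 lo) big_addn subn1 /=.
by apply: eq_bigr => v _; rewrite addn1 Ch_shift_gen.
Qed.

Lemma Ch_bridge h B : Ch 1 (h.+1 :: map S B) = Ch 2 (map S B) + Ch 1 (h :: B).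
Proof.
rewrite /= big_ltn // sum_shift //.
Qed.

Lemma Ch_one X : Ch 1 (1 :: X) = Ch 2 X.
Proof. by rewrite /= big_nat1. Qed.

Lemma Ch_lt lo b B : b < lo -> Ch lo (b :: B) = 0.
Proof. by move=> H; rewrite /= big_geq. Qed.

Lemma Ch_pos B : forall lo, (forall p, p < size B -> lo + p <= nth 0 B p) -> 0 < Ch lo B.
Proof.
elim: B => [|b B IH] lo H //=.
have H0 := H 0 erefl; rewrite addn0 /= in H0.
rewrite big_ltn ?ltnS //.
apply: leq_trans (leq_addr _ _); apply: IH => p Hp.
have := H p.+1 Hp; by rewrite /= addSnnS.
Qed.

Lemma Ch_maxrec t x bs : forall lo,
  Ch lo (map (minn t.+1) (rcons bs x)) =
  Ch lo (map (minn t) (rcons bs x)) +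
  (if (t < x) && (lo <= t.+1) then Ch lo (map (minn t) bs) else 0).
Proof.
elim: bs => [|b bs IH] lo /=.
  rewrite !sum_nat_const_nat !muln1.
  case: ltnP => Htx /=; case: leqP => Hl /=; lia.
under eq_bigr do rewrite IH.
rewrite big_split /=.
have Z : forall v, t < v -> Ch v (map (minn t) (rcons bs x)) = 0.
  move=> v Hv; case: bs {IH} => [|y ys]; apply: Ch_lt; lia.
case: (leqP b t) => Hbt.
  have -> : minn t.+1 b = b by lia.
  try (have -> : minn t b = b by lia).
  congr (_ + _).
  case: (ltnP t x) => Htx /=; last by rewrite big1.
  case: (leqP lo t.+1) => Hl.
    by apply: eq_big_nat => v /andP [_ Hv]; rewrite ifT //; lia.
  rewrite big_geq //; lia.
have -> : minn t.+1 b = t.+1 by lia.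
try (have -> : minn t b = t by lia).
case: (leqP lo t.+1) => Hl; last by rewrite !big_geq ?andbF //; lia.
rewrite big_nat_recr //= Z // addn0.
rewrite [\sum_(lo <= i < t.+2) _]big_nat_recr //= ltnn andbF addn0 andbT.
congr (_ + _).
case: (ltnP t x) => Htx /=; last by rewrite big1.
by apply: eq_big_nat => v /andP [_ Hv]; rewrite ifT //; lia.
Qed.

Lemma Ch_cons lo b bs : Ch lo (b :: bs) = \sum_(lo <= v < b.+1) Ch v.+1 bs.
Proof. by []. Qed.
Lemma Ch_nil lo : Ch lo [::] = 1.
Proof. by []. Qed.
Arguments Ch : simpl never.


Fixpoint ok (h : nat) (w : seq bool) : bool :=
  match w with
  | [::] => true
  | true :: w' => ok h.+1 w'
  | false :: w' => (0 < h) && ok h.-1 w'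
  end.

Definition pok h (w : seq bool) :=
  all (fun i => count_mem false (take i w) <= h + count_mem true (take i w))
      (iota 0 (size w).+1).

Lemma pok_ok w : forall h, pok h w = ok h w.
Proof.
elim: w => [|b w IH] h; first by [].
have E : forall (P : pred nat) s, all P (0 :: map S s) = P 0 && all (P \o S) s.
  by move=> P s; rewrite /= all_map.
rewrite /pok (_ : iota 0 (size (b::w)).+1 = 0 :: map S (iota 0 (size w).+1)); last first.
  exact: (congr1 (cons 0) (iotaDl 1 0 (size w).+1)).
have H0 : 0 \in iota 0 (size w).+1 by [].
rewrite E; move: IH H0; rewrite /pok; move: (iota 0 (size w).+1) => I IH H0.
rewrite take0 /=.
case: b => /=.
  rewrite -IH; apply: eq_all => i /=; apply/idP/idP => ?; lia.
case: h => [|h] /=.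
  by apply: negbTE; apply/allPn; exists 0 => //=; rewrite take0.
rewrite -IH; apply: eq_all => i /=; apply/idP/idP => ?; lia.
Qed.

Lemma prefix_ok_ok w : prefix_ok w = ok 0 w.
Proof. by rewrite -pok_ok. Qed.

Fixpoint words (L : nat) : seq (seq bool) :=
  if L is L'.+1 then [seq true :: w | w <- words L'] ++ [seq false :: w | w <- words L']
  else [:: [::]].

Lemma cons_inj (b : bool) : injective (cons b).
Proof. by move=> u v [->]. Qed.

Lemma mem_words L s : (s \in words L) = (size s == L).
Proof.
elim: L s => [|L IH] [|b s]; rewrite /= ?mem_seq1 //.
  rewrite mem_cat; apply/negbTE; rewrite negb_or.
  by apply/andP; split; apply/mapP => -[].
rewrite mem_cat eqSS -IH.
case: b; rewrite (mem_map (@cons_inj _)).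
  by apply/orb_idr => /mapP [].
by apply/orb_idl => /mapP [].
Qed.

Lemma uniq_words L : uniq (words L).
Proof.
elim: L => [|L IH] //=.
rewrite cat_uniq !(map_inj_uniq (@cons_inj _)) IH andbT /=.
by apply/hasPn => u /mapP [v _ ->]; apply/mapP => -[].
Qed.

Lemma card_words (P : pred (seq bool)) L :
  #|[set t : L.-tuple bool | P t]| = count P (words L).
Proof.
rewrite cardE /enum_mem size_filter.
rewrite (eq_count (a2 := preim val P)); last by move=> t; rewrite /= inE.
rewrite -count_map.
apply/permP; apply: uniq_perm.
- by rewrite (map_inj_uniq val_inj) -?enumT ?enum_uniq.
- exact: uniq_words.
move=> s; rewrite mem_words; apply/mapP/idP.
  by move=> [t _ ->]; rewrite size_tuple.
move=> /eqP Hs; exists (Tuple (introT eqP Hs)) => //.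
Qed.

Lemma count_words_S (P : pred (seq bool)) L :
  count P (words L.+1) =
  count (fun w => P (true :: w)) (words L) + count (fun w => P (false :: w)) (words L).
Proof. by rewrite /= count_cat !count_map. Qed.

Definition Pr h c al (w : seq bool) :=
  [&& ok h w, h + count_mem true w == count_mem false w & asc_aux c w == al].

Fixpoint bl (x : nat) (s : seq nat) : seq nat :=
  if s is a :: s' then x :: bl (x + a) s' else [::].

Lemma bl_S s : forall x, bl x.+1 s = map S (bl x s).
Proof. by elim: s => [|a s IH] x //=; rewrite addSn IH. Qed.

Definition bnd h c al :=
  if al is a :: al' then (if 0 < c then 1 :: bl (h.+1 + a - c) al' else bl h.+1 al)
  else [::].

Definition V L h c al :=
  if (L == h + 2 * (sumn al - c)) && (c <= head 0 al) then Ch 1 (bnd h c al) else 0.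

Lemma Pr_true h c al w : Pr h c al (true :: w) = Pr h.+1 c.+1 al w.
Proof. by rewrite /Pr /= add0n addnS addSn. Qed.

Lemma Pr_false h c al w : Pr h c al (false :: w) =
  (0 < h) && [&& ok h.-1 w, h + count_mem true w == (count_mem false w).+1 &
     (if 0 < c then c :: asc_aux 0 w else asc_aux 0 w) == al].
Proof. by rewrite /Pr /= add0n add1n; case: (0 < h). Qed.

Lemma V_step0 L h al : all (fun a => 0 < a) al ->
  V L.+1 h 0 al = V L h.+1 1 al + (if h is h'.+1 then V L h' 0 al else 0).
Proof.
case: al => [|a al] /=.
  by move=> _; rewrite /V /= andbF; case: h => [|h] //=; rewrite addn0 andbT eqSS.
move=> /andP [Ha Hal].
rewrite /V /= !subn0 Ha andbT.
have E1 : (L.+1 == h + 2 * (a + sumn al)) = (L == h.+1 + 2 * (a + sumn al - 1)).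
  by apply/eqP/eqP => ?; lia.
rewrite E1; case: eqP => HL; last first.
  case: h HL {E1} => [|h] HL //=; rewrite ifF //; apply/eqP; lia.
have -> : h.+2 + a - 1 = h.+1 + a by lia.
rewrite Ch_one.
have -> : bl (h.+1 + a) al = map S (bl (h + a) al) by rewrite addSn bl_S.
rewrite Ch_bridge; congr (_ + _).
clear E1; case: h HL => [|h] HL /=; first by rewrite Ch_lt.
by rewrite ifT //; apply/eqP; lia.
Qed.

Lemma sumn0_pos al : all (fun a => 0 < a) al -> sumn al = 0 -> al = [::].
Proof. by case: al => [|a al] //= /andP [Ha _]; lia. Qed.

Lemma V_stepS L h c al : all (fun a => 0 < a) al ->
  V L.+1 h c.+1 al = V L h.+1 c.+2 al +
   (if h is h'.+1 then (if al is a :: al' then (if a == c.+1 then V L h' 0 al' else 0) else 0)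
    else 0).
Proof.
case: al => [|a al] /=.
  by move=> _; rewrite /V /= !andbF; case: h.
move=> /andP [Ha Hal].
rewrite /V /=.
case: (ltngtP a c.+1) => Hac.
- by rewrite !andbF; case: h.
- rewrite !andbT.
  have -> : (L.+1 == h + 2 * (a + sumn al - c.+1)) = (L == h.+1 + 2 * (a + sumn al - c.+2)).
    by apply/eqP/eqP => ?; lia.
  have -> : h.+1 + a - c.+1 = h.+2 + a - c.+2 by lia.
  by case: h => [|h]; rewrite addn0.
- subst a; rewrite andbT andbF add0n subn0.
  have -> : h.+1 + c.+1 - c.+1 = h.+1 by lia.
  have -> : c.+1 + sumn al - c.+1 = sumn al by lia.
  case: h => [|h].
    case: al Hal => [|a2 al] Hal /=; first by [].
    case: ifP => // _.
    by rewrite Ch_one Ch_lt.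
  have -> : (L.+1 == h.+1 + 2 * sumn al) = (L == h + 2 * sumn al).
    by apply/eqP/eqP => ?; lia.
  rewrite andbT; case: ifP => // _.
  rewrite Ch_one bl_S Ch_shift_gen.
  by case: al {Hal}.
Qed.

Lemma count_Pr L : forall h c al, all (fun a => 0 < a) al ->
  count (Pr h c al) (words L) = V L h c al.
Proof.
elim: L => [|L IH] h c al Hal.
  rewrite /= addn0 /Pr /= addn0 /V.
  case: al Hal => [|a al] Hal.
    by case: c => [|c]; case: h => [|h]; rewrite /= ?andbF.
  move: Hal => /= /andP [Ha Hal].
  case: c => [|c].
    by rewrite /= andbF; case: ifP => // /andP [/eqP]; lia.
  case: h => [|h] /=; last by [].
  case: (boolP ((c.+1 == a) && (al == [::]))) => [/andP [/eqP <- /eqP ->]|H].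
    by rewrite eqxx /= addn0 subnn leqnn Ch_one Ch_nil.
  have -> : ([:: c.+1] == a :: al) = false.
    by apply/negbTE; rewrite eqseq_cons; case: al H {Hal} => [|? ?]; rewrite ?andbT ?andbF.
  case: ifP => // /andP [/eqP E Hc].
  have Hs : sumn al = 0 by lia.
  have Hal0 := sumn0_pos Hal Hs.
  have Hca : c.+1 = a by lia.
  by rewrite Hca Hal0 !eqxx in H.
rewrite count_words_S (eq_count (Pr_true h c al)) IH //.
rewrite (eq_count (Pr_false h c al)).
case: h => [|h].
  rewrite (eq_count (a2 := pred0)) // count_pred0 addn0.
  by case: c => [|c]; rewrite ?V_step0 ?V_stepS // addn0.
case: c => [|c].
  rewrite (eq_count (a2 := Pr h 0 al)); last first.
    by move=> w; rewrite /Pr /= addSn eqSS.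
  by rewrite IH // V_step0.
rewrite V_stepS //.
congr (_ + _).
case: al Hal => [|a al] Hal.
  by rewrite (eq_count (a2 := pred0)) ?count_pred0 // => w; rewrite /= !andbF.
move: Hal => /= /andP [Ha Hal].
case: eqP => [<-|Hne].
  rewrite -IH //; apply: eq_count => w.
  by rewrite /Pr /= addSn eqSS eqseq_cons eqxx.
rewrite (eq_count (a2 := pred0)) ?count_pred0 // => w.
rewrite /= eqseq_cons; case: (c.+1 =P a) => [E|_]; last by rewrite !andbF.
by rewrite E in Hne.
Qed.


Lemma count_tf (w : seq bool) : count_mem true w + count_mem false w = size w.
Proof. elim: w => [|[] w IH] //=; rewrite ?add0n. by rewrite -addnA IH. by rewrite addnCA IH. Qed.

Lemma num_eq n a al : is_composition n (a :: al) ->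
  num_dyck_asc n (a :: al) = Ch 1 (bl a al).
Proof.
move=> /andP [Hpos /eqP Hsum].
rewrite /num_dyck_asc (card_words (fun w => dyck n w && (ascent_comp w == a :: al))).
rewrite (eq_in_count (a2 := Pr 0 0 (a :: al))); last first.
  move=> w; rewrite mem_words => /eqP Hw.
  rewrite /dyck /Pr /ascent_comp prefix_ok_ok Hw eqxx /= add0n.
  have := count_tf w; rewrite Hw => Ht.
  have -> : (count_mem true w == n) = (count_mem true w == count_mem false w).
    by apply/eqP/eqP => ?; lia.
  by case: (ok 0 w); case: (_ == _).
rewrite count_Pr // /V /= subn0 -Hsum /= add0n eqxx /=.
by rewrite Ch_one add1n bl_S Ch_shift_gen.
Qed.

Import GRing.Theory.

Section Det.
Variable b : nat -> nat.
Hypothesis bmono : forall i, b i <= b i.+1.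

Definition F i t := Ch 1 (map (minn t) (mkseq b i)).
Definition hh r x := 'C(x + r - 1, r).
Definition Hc r i t := hh r (minn t (b i)).

Lemma F0 t : F 0 t = 1.
Proof. by []. Qed.

Lemma FS0 i : F i.+1 0 = 0.
Proof. by rewrite /F /= Ch_lt // min0n. Qed.

Lemma FS i t : F i.+1 t.+1 = F i.+1 t + (if t < b i then F i t else 0).
Proof. by rewrite /F mkseqS Ch_maxrec andbT. Qed.

Lemma Hc0 i t : Hc 0 i t = 1.
Proof. by rewrite /Hc /hh bin0. Qed.

Lemma HcS0 r i : Hc r.+1 i 0 = 0.
Proof. by rewrite /Hc /hh min0n add0n subSS subn0 bin_small. Qed.

Lemma HcS r i t : Hc r.+1 i t.+1 = Hc r.+1 i t + (if t < b i then Hc r i t.+1 else 0).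
Proof.
rewrite /Hc /hh; case: ltnP => H.
  have -> : minn t.+1 (b i) = t.+1 by lia.
  try (have -> : minn t (b i) = t by lia).
  have -> : t.+1 + r.+1 - 1 = (t + r).+1 by lia.
  have -> : t + r.+1 - 1 = t + r by lia.
  have -> : t.+1 + r - 1 = t + r by lia.
  by rewrite binS.
have -> : minn t.+1 (b i) = b i by lia.
try (have -> : minn t (b i) = b i by lia).
by rewrite addn0.
Qed.

Lemma Hc_mono r i t : t < b i -> Hc r i t.+1 = Hc r i.+1 t.+1.
Proof.
move=> H; rewrite /Hc; have := bmono i => H2.
have -> : minn t.+1 (b i) = t.+1 by lia.
have -> : minn t.+1 (b i.+1) = t.+1 by lia.
by [].
Qed.

Local Open Scope ring_scope.

Definition term J t i : int := (-1) ^+ i * (F i t)%:Z * (Hc (J - i) i t)%:Z.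
Definition Phi J t := \sum_(i < J.+1) term J t i.

Definition Aterm J t i : int :=
  if (i < J)%N && (t < b i)%N then (-1) ^+ i * (F i t)%:Z * (Hc (J - i).-1 i t.+1)%:Z else 0.
Definition Bterm J t i : int :=
  if i is i'.+1 then
    (if (t < b i')%N then (-1) ^+ i * (F i' t)%:Z * (Hc (J - i) i t.+1)%:Z else 0)
  else 0.

Lemma term_step J t i : term J t.+1 i = term J t i + Aterm J t i + Bterm J t i.
Proof.
rewrite /term /Aterm /Bterm.
have HF : (F i t.+1)%:Z = (F i t)%:Z +
   (if i is i'.+1 then (if (t < b i')%N then (F i' t)%:Z else 0) else 0).
  case: i => [|i]; first by rewrite !F0 addr0.
  by rewrite FS PoszD; case: ifP.
have HH : (Hc (J - i) i t.+1)%:Z = (Hc (J - i) i t)%:Z +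
   (if (i < J)%N && (t < b i)%N then (Hc (J - i).-1 i t.+1)%:Z else 0).
  case: (ltnP i J) => Hij /=.
    have -> : (J - i = (J - i).-1.+1)%N by lia.
    by rewrite HcS PoszD /=; case: ifP.
  have -> : (J - i = 0)%N by lia.
  by rewrite !Hc0 addr0.
rewrite HF mulrDr mulrDl HH mulrDr.
case: i HF HH => [|i] _ _; rewrite ?addr0.
  by case: ifP => _; rewrite ?mulr0 ?addr0.
case: ifP => _; case: ifP => _; rewrite ?mulr0 ?addr0 ?mulrA //.
Qed.

Lemma Phi0 t : forall J, (0 < J)%N -> Phi J t = 0.
Proof.
elim: t => [|t IH] J HJ.
  apply: big1 => -[[|i] Hi] _; rewrite /term /=.
    by case: J HJ {Hi} => [|J] // _; rewrite subn0 HcS0 mulr0.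
  by rewrite FS0 mulr0 mul0r.
rewrite /Phi.
under eq_bigr do rewrite term_step.
rewrite !big_split /= -/(Phi J t) IH // add0r.
rewrite [\sum_(i < J.+1) Aterm J t i]big_ord_recr [\sum_(i < J.+1) Bterm J t i]big_ord_recl /=.
rewrite {2}/Aterm ltnn andFb addr0 add0r.
rewrite -big_split /=; apply: big1 => i _.
rewrite /bump /= add1n add0n.
rewrite /Aterm ltn_ord /=.
case: ifP => Hb; rewrite ?addr0 //.
rewrite Hc_mono // exprS mulN1r !mulNr.
have -> : ((J - i).-1 = J - i.+1)%N by lia.
by rewrite subrr.
Qed.

End Det.


Section Mat.
Variable b : nat -> nat.
Variable N : nat.
Hypothesis bmono : forall i, b i <= b i.+1.
Hypothesis bN : forall i, b i <= N.

Lemma FN i : F b i N = Ch 1 (mkseq b i).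
Proof.
rewrite /F /mkseq -map_comp; congr (Ch 1 _); apply: eq_map => x /=.
by have := bN x; lia.
Qed.

Lemma HcN r i : Hc b r i N = hh r (b i).
Proof. by rewrite /Hc; have := bN i => H; congr hh; lia. Qed.

Local Open Scope ring_scope.

Definition f i : int := (F b i N)%:Z.

Lemma rowsum J : (0 < J)%N ->
  \sum_(i < J.+1) (-1) ^+ i * f i * (hh (J - i) (b i))%:Z = 0.
Proof.
move=> HJ; rewrite -[RHS](Phi0 bmono N HJ) /Phi; apply: eq_bigr => i _.
by rewrite /term HcN.
Qed.

Definition Am m : 'M[int]_m :=
  \matrix_(i, j) (if (i <= j.+1)%N then (hh (j.+1 - i) (b i))%:Z else 0).

Lemma f_pos m : (forall p, (p < m)%N -> (p < b p)%N) -> f m != 0.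
Proof.
move=> H; rewrite /f FN -[0]/(Posz 0) eqz_nat -lt0n; apply: Ch_pos => p.
rewrite size_mkseq => Hp; rewrite nth_mkseq // add1n; exact: H.
Qed.

Lemma detAm m : (forall p, (p < m)%N -> (p < b p)%N) -> \det (Am m) = f m.
Proof.
elim: m => [|m IH] Hb; first by rewrite det_mx00 /f F0.
set w := fun j : nat => (-1) ^+ j * f j.
pose W : 'M[int]_(m.+1) := \matrix_(i, j) (if i == ord_max then w j else (i == j)%:R).
have detW : \det W = w m.
  rewrite det_trig; last first.
    apply/is_trig_mxP => i j Hij; rewrite mxE.
    have -> : (i == ord_max) = false.
      by apply/negbTE; apply: contraTneq Hij => ->; rewrite -ltnNge ltnS -ltnS.
    by have -> : (i == j) = false by apply/negbTE; rewrite neq_ltn Hij.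
  rewrite big_ord_recr /= big1 ?mul1r => [|i _]; rewrite mxE.
    by rewrite eqxx.
  have -> : (widen_ord (leqnSn m) i == ord_max) = false.
    by apply/negbTE; rewrite -val_eqE /= neq_ltn ltn_ord.
  by rewrite eqxx.
set A := Am m.+1.
have rowW : forall (i : 'I_m.+1) j, i != ord_max -> (W *m A) i j = A i j.
  move=> i j Hi; rewrite mxE (bigD1 i) //= big1 => [|k Hk]; rewrite !mxE (negbTE Hi).
    by rewrite eqxx mul1r addr0.
  by rewrite eq_sym (negbTE Hk) mul0r.
have hh0 : forall x, hh 0 x = 1%N by move=> x; rewrite /hh bin0.
have rowL : forall j, (W *m A) ord_max j = if j == ord_max then (-1) ^+ m * f m.+1 else 0.
  move=> j; rewrite mxE.
  under eq_bigr do rewrite !mxE eqxx.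
  case: (unliftP ord_max j) => [j'|] ->.
    rewrite eq_sym (negbTE (neq_lift _ _)).
    rewrite lift_max.
    transitivity (\sum_(k < m.+1 | (k < j'.+2)%N) w k * (hh (j'.+1 - k) (b k))%:Z).
      rewrite [RHS]big_mkcond; apply: eq_bigr => k _; rewrite ltnS.
      by case: ifP => _ //; rewrite mulr0.
    rewrite -(@big_ord_widen _ _ _ j'.+2 m.+1 (fun k => w k * (hh (j'.+1 - k) (b k))%:Z)); first exact: rowsum.
    by have := ltn_ord j'.
  rewrite eqxx.
  have := rowsum (J := m.+1) erefl.
  rewrite big_ord_recr /= subnn hh0 mulr1 => /eqP; rewrite addr_eq0 => /eqP H.
  rewrite (eq_bigr (fun i : 'I_m.+1 => (-1)^+i * f i * (hh (m.+1 - i) (b i))%:Z)); last first.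
    by move=> i _; rewrite ifT ?mulrA // ltnW.
  by rewrite H exprS mulN1r mulNr opprK.
have detWA : \det (W *m A) = (-1) ^+ m * f m.+1 * \det (Am m).
  rewrite (expand_det_row _ ord_max) big_ord_recr /= big1 ?add0r => [|j _]; last first.
    rewrite rowL ifF ?mul0r //.
    by apply/negbTE; rewrite -val_eqE /= neq_ltn ltn_ord.
  rewrite rowL eqxx /cofactor; congr (_ * _).
  have -> : (-1) ^+ (@ord_max m + @ord_max m)%N = 1 :> int.
    by rewrite -signr_odd addnn odd_double.
  rewrite mul1r; congr (\det _); apply/matrixP => i j.
  rewrite [LHS]mxE [LHS]mxE rowW ?(eq_sym _ ord_max) ?neq_lift //.
  by rewrite /A !mxE !lift_max.
move: detWA; rewrite det_mulmx detW IH => [H|p Hp]; last by apply: Hb; lia.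
have Hw : w m != 0 by rewrite /w mulf_eq0 signr_eq0 /= (f_pos (m := m)) // => p Hp; apply: Hb; lia.
apply: (mulfI Hw); rewrite H /w.
by rewrite -!mulrA [f m * _]mulrC.
Qed.
End Mat.


Lemma bl_mkseq s : forall x, bl x s = mkseq (fun p => x + sumn (take p s)) (size s).
Proof.
elim: s => [|a s IH] x //=.
rewrite IH /mkseq /= addn0; congr (_ :: _).
rewrite (iotaDl 1 0) -map_comp; apply: eq_map => p /=.
by rewrite addnA.
Qed.

Lemma sumn_take_le s : forall i, sumn (take i s) <= sumn (take i.+1 s).
Proof.
elim: s => [|a s IH] [|i] //=.
by rewrite leq_add2l.
Qed.

Lemma sumn_take_all s i : sumn (take i s) <= sumn s.
Proof. by rewrite -{2}(cat_take_drop i s) sumn_cat leq_addr. Qed.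

Lemma sumn_take_pos s : forall i, all (fun a => 0 < a) s -> minn i (size s) <= sumn (take i s).
Proof.
elim: s => [|a s IH] [|i] //= /andP [Ha Hs].
have := IH i Hs; lia.
Qed.

Theorem lemma4p8 (n : nat) (alpha : seq nat) :
  is_composition n alpha -> 0 < size alpha ->
  Posz (num_dyck_asc n alpha) = (\det (asc_matrix alpha))%R.
Proof.
case: alpha => [|a al] // Hc _.
have Hc' := Hc; move: Hc' => /andP [Hpos /eqP Hsum].
pose b := fun p => sumn (take p.+1 (a :: al)).
have bmono : forall i, b i <= b i.+1 by move=> i; exact: sumn_take_le.
have bN : forall i, b i <= n by move=> i; rewrite -Hsum; exact: sumn_take_all.
have Hb : forall p, p < size al -> p < b p.
  move=> p Hp; have := sumn_take_pos p.+1 Hpos; rewrite /b /=; lia.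
have -> : asc_matrix (a :: al) = Am b (size al).
  apply/matrixP => i j; rewrite !mxE; case: ifP => // Hij.
  rewrite /hh /b /=; congr (Posz (binomial _ _)).
  have L : forall x y s, x <= y.+1 -> y + s - x = s + (y.+1 - x) - 1 by move=> *; lia.
  exact: L.
rewrite (detAm bmono bN Hb) /f FN // num_eq // bl_mkseq.
by [].
Qed.
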